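(* Let $X$ be a real Hilbert space, let $\lambda>0$, and let $f\colon X\to\,]-\infty,+\infty]$ be proper, lower semicontinuous, minorized by a concave quadratic (there exist $\nu,\beta\in\mathbb R$, $\alpha\ge0$ with $f(x)\ge-\alpha\|x\|^2-\beta\|x\|+\nu$ for all $x$), and $\tfrac1\lambda$-hypoconvex. Then for every abstract subdifferential $\hat\partial$, $$\hat\partial f=\partial\Big(f+\tfrac{1}{2\lambda}\|\cdot\|^2\Big)-\tfrac1\lambda\mathrm{Id}.$$ Consequently, for such $f$ the Clarke–Rockafellar, Mordukhovich and Fréchet subdifferentials of $f$ all coincide.
   Context: $\partial$ denotes the convex-analysis subdifferential. $f$ is $\tfrac1\lambda$-hypoconvex if $f((1-\tau)x+\tau y)\le(1-\tau)f(x)+\tau f(y)+\tfrac{1}{2\lambda}\tau(1-\tau)\|x-y\|^2$ for all $x,y\in X$, $\tau\in]0,1[$. An abstract subdifferential $\hat\partial$ assigns to a function $g$ (in the class of proper lsc functions minorized by a concave quadratic) and $x\in X$ a set $\hat\partial g(x)\subseteq X$ such that: (a) $\hat\partial g=\partial g$ if $g$ is proper lsc convex; (b) $\hat\partial g=\nabla g$ if $g$ is continuously differentiable; (c) $0\in\hat\partial g(x)$ if $g$ attains a local minimum at $x\in\operatorname{dom}g$; (d) for every $\beta\in\mathbb R$ and $x\in X$, $\hat\partial\big(g+\beta\tfrac{\|\cdot-x\|^2}{2}\big)=\hat\partial g+\beta(\mathrm{Id}-x)$. The Clarke–Rockafellar, Mordukhovich and Fréchet subdifferentials satisfy (a)–(d).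 *)

(* Defs.v *)
From HB Require Import structures.
From mathcomp Require Import all_boot all_order all_algebra.
From mathcomp Require Import all_classical all_reals all_analysis.
Set Implicit Arguments. Unset Strict Implicit. Unset Printing Implicit Defensive.
Import Order.TTheory GRing.Theory Num.Theory.
Import numFieldNormedType.Exports.
Local Open Scope classical_set_scope.
Local Open Scope ring_scope.

Section Defs.
Context {R : realType} {X : normedModType R}.

(* ip is an inner product on X inducing the norm of X. Together with the
   completeness of X (a completeNormedModType) this makes X a real Hilbert space. *)
Definition is_inner_product (ip : X -> X -> R) : Prop :=
  [/\ (forall x y, ip x y = ip y x),
      (forall a x y z, ip (a *: x + y) z = a * ip x z + ip y z)
    & (forall x, ip x x = `|x| ^+ 2)].

Local Open Scope ereal_scope.

Definition never_minfty (f : X -> \bar R) := forall x, f x != -oo.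

Definition proper_fun (f : X -> \bar R) :=
  never_minfty f /\ exists x, f x < +oo.

Definition minorized_concave_quad (f : X -> \bar R) :=
  exists (nu beta alpha : R), (0 <= alpha)%R /\
    forall x, ((- alpha * `|x| ^+ 2 - beta * `|x| + nu)%R)%:E <= f x.

Definition admissible (f : X -> \bar R) :=
  [/\ proper_fun f, lower_semicontinuous f & minorized_concave_quad f].

Definition convex_efun (f : X -> \bar R) :=
  forall (x y : X) (t : R), (0 < t < 1)%R ->
    f (((1 - t) *: x + t *: y)%R) <= (1 - t)%:E * f x + t%:E * f y.

Definition hypoconvex (lambda : R) (f : X -> \bar R) :=
  forall (x y : X) (t : R), (0 < t < 1)%R ->
    f (((1 - t) *: x + t *: y)%R) <=
      (1 - t)%:E * f x + t%:E * f y
      + ((2 * lambda)^-1 * t * (1 - t) * `|x - y| ^+ 2)%:E.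

Definition csubdiff (ip : X -> X -> R) (f : X -> \bar R) (x : X) : set X :=
  [set u | f x \is a fin_num /\ forall y, f x + (ip u (y - x)%R)%:E <= f y].

Definition C1_with_gradient (ip : X -> X -> R) (f : X -> \bar R) (grad : X -> X) :=
  exists h : X -> R^o, [/\ (forall x, f x = (h x)%:E),
     (forall x, differentiable h x /\ forall v, 'd h x v = ip (grad x) v)
   & continuous grad].

Local Close Scope ereal_scope.

Definition abstract_subdiff (ip : X -> X -> R)
    (sd : (X -> \bar R) -> X -> set X) : Prop :=
  [/\ (* (a) *) (forall g, admissible g -> convex_efun g -> sd g = csubdiff ip g),
      (* (b) *) (forall g grad, admissible g -> C1_with_gradient ip g grad ->
                   sd g = fun x => [set grad x]),
      (* (c) *) (forall g x, admissible g -> (g x < +oo)%E ->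
                   (\forall y \near x, (g x <= g y)%E) -> sd g x 0)
    & (* (d) *) (forall g (beta : R) (x0 : X), admissible g ->
                   sd (fun y => (g y + (beta * (`|y - x0| ^+ 2 / 2))%:E)%E) =
                   fun x => (fun u => u + beta *: (x - x0)) @` sd g x)].

End Defs.

(* Main.v *)
Require Import Defs.
From HB Require Import structures.
From mathcomp Require Import all_boot all_order all_algebra.
From mathcomp Require Import all_classical all_reals all_analysis.
From mathcomp Require Import ring lra.
Import Order.TTheory GRing.Theory Num.Theory.
Import numFieldNormedType.Exports.
Local Open Scope classical_set_scope.
Local Open Scope ring_scope.

Section Helpers.
Context {R : realType} {X : completeNormedModType R} (ip : X -> X -> R).
Hypothesis Hip : is_inner_product ip.

Lemma ip0 z : ip 0 z = 0.
Proof.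
case: Hip => _ Hl _; have := Hl 1 0 0 z; rewrite scale1r addr0 mul1r => H.
have : ip 0 z + ip 0 z - ip 0 z = ip 0 z - ip 0 z by rewrite -H.
by rewrite addrK subrr.
Qed.

Lemma ipZ a x z : ip (a *: x) z = a * ip x z.
Proof. case: Hip => _ Hl _; by rewrite -(addr0 (a *: x)) Hl ip0 addr0. Qed.

Lemma ipD x y z : ip (x + y) z = ip x z + ip y z.
Proof. case: Hip => _ Hl _; by have := Hl 1 x y z; rewrite scale1r mul1r. Qed.

Lemma ipB x y z : ip (x - y) z = ip x z - ip y z.
Proof. by rewrite ipD -scaleN1r ipZ mulN1r. Qed.

Lemma ipN x z : ip (- x) z = - ip x z.
Proof. by rewrite -scaleN1r ipZ mulN1r. Qed.

Lemma norm_comb (t : R) (x y : X) :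
  `|(1 - t) *: x + t *: y| ^+ 2 =
  (1 - t) * `|x| ^+ 2 + t * `|y| ^+ 2 - t * (1 - t) * `|x - y| ^+ 2.
Proof.
case: Hip => Hs _ Hn; rewrite -!Hn.
rewrite !ipD !ipN !ipZ (Hs x ((1 - t) *: x + t *: y)) (Hs y ((1 - t) *: x + t *: y)).
rewrite (Hs x (x - y)) (Hs y (x - y)) !ipD !ipN !ipZ (Hs y x); ring.
Qed.

Variables (lambda : R) (f : X -> \bar R).
Hypothesis lam0 : 0 < lambda.
Hypothesis fpr : proper_fun f.
Hypothesis fhyp : hypoconvex lambda f.

Let g := (fun y => (f y + (`|y| ^+ 2 / (2 * lambda))%:E)%E).

Lemma rhs_infty (a b : R) (e1 e2 : \bar R) : 0 < a -> 0 < b ->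
  e1 != -oo%E -> e2 != -oo%E -> (e1 == +oo%E) || (e2 == +oo%E) ->
  (a%:E * e1 + b%:E * e2 = +oo)%E.
Proof.
move=> a0 b0; case: e1 => [r1| |] //; case: e2 => [r2| |] // _ _ _.
- by rewrite mulry gtr0_sg // mul1e addey.
- by rewrite mulry gtr0_sg // mul1e addye.
- by rewrite mulry gtr0_sg // mul1e mulry gtr0_sg // mul1e.
Qed.

Lemma g_convex : convex_efun g.
Proof.
move=> x y t /andP[t0 t1]; rewrite /g.
have H := fhyp x y t ltac:(by rewrite t0 t1).
have [nm _] := fpr.
have nx := nm x; have ny := nm y.
have t1' : 0 < 1 - t by rewrite subr_gt0.
have nz := nm ((1 - t) *: x + t *: y).
move: H nx ny nz.
case: (f x) => [rx| |] //; case: (f y) => [ry| |] //;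
  case: (f ((1 - t) *: x + t *: y)) => [rz| |] //= H _ _ _.
- move: H; rewrite -?EFinD -?EFinM -?EFinD ?lee_fin => H.
  apply: (le_trans (lerD H (lexx _))); rewrite norm_comb le_eqVlt; apply/orP; left; apply/eqP.
  have l2 : lambda != 0 by rewrite gt_eqF.
  field; exact: l2.
all: rewrite -?EFinD !addye // rhs_infty ?leey //.
Qed.

Lemma aux_lt (a b c : R) (e : \bar R) : (b%:E < e)%E -> a - b < c -> (a%:E < e + c%:E)%E.
Proof.
case: e => [r| |] //=.
- by rewrite !lte_fin => ? ?; lra.
- by move=> _ _; rewrite addye // ltey.
Qed.

Lemma aux_ex (a c : R) (e : \bar R) : e != -oo%E -> (a%:E < e + c%:E)%E ->
  exists b, (b%:E < e)%E /\ a - b < c.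
Proof.
case: e => [r| |] //= _.
- rewrite lte_fin => H; exists (r - (r + c - a) / 2); split; rewrite ?lte_fin; lra.
- by move=> _; exists (a - c + 1); split; [rewrite ltey | lra].
Qed.

Lemma h_cont (x : X) :
  (fun y : X => `|y| ^+ 2 / (2 * lambda)) y @[y --> x] --> `|x| ^+ 2 / (2 * lambda).
Proof.
apply: cvgMr_tmp; rewrite expr2.
under eq_fun => y do rewrite expr2.
by apply: cvgM; exact: norm_continuous.
Qed.

Lemma g_lsc : lower_semicontinuous f -> lower_semicontinuous g.
Proof.
move=> lf x a; rewrite /g => ha.
have [nm _] := fpr.
have [b [hb hab]] := aux_ex _ _ _ (nm x) ha.
have [V nV HV] := lf x b hb.
exists (V `&` [set y | a - b < `|y| ^+ 2 / (2 * lambda)]).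
  apply: filterI => //; exact: (cvgr_gt _ (h_cont x) _ hab).
by move=> y [/HV Vy /= Hy]; exact: (aux_lt _ _ _ _ Vy Hy).
Qed.

Lemma g_adm : lower_semicontinuous f -> minorized_concave_quad f -> admissible g.
Proof.
move=> lf [nu [beta [alpha [a0 Hm]]]]; split.
- have [nm [x0 Hx0]] := fpr; split.
    move=> y; rewrite /g; move: (nm y); case: (f y) => //.
  exists x0; rewrite /g; move: Hx0; case: (f x0) => //= r _.
  by rewrite -EFinD ltey.
- exact: g_lsc.
- exists nu, beta, alpha; split => // x; rewrite /g.
  apply: (le_trans (Hm x)); apply: leeDl; rewrite lee_fin.
  by apply: divr_ge0; [exact: exprn_ge0 | rewrite mulr_ge0 // ltW].
Qed.

End Helpers.

Theorem proposition6p2 (R : realType) (X : completeNormedModType R)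
  (ip : X -> X -> R) (lambda : R) (f : X -> \bar R) :
  is_inner_product ip -> 0 < lambda ->
  proper_fun f -> lower_semicontinuous f -> minorized_concave_quad f ->
  hypoconvex lambda f ->
  (forall sd, abstract_subdiff ip sd ->
     forall x, sd f x =
       (fun u => u - lambda^-1 *: x) @`
         csubdiff ip (fun y => (f y + (`|y| ^+ 2 / (2 * lambda))%:E)%E) x)
  /\
  (forall sd1 sd2, abstract_subdiff ip sd1 -> abstract_subdiff ip sd2 ->
     sd1 f = sd2 f).
Proof.
move=> Hip lam0 fpr lf fm fh.
have gc := @g_convex R X ip Hip lambda f lam0 fpr fh.
have ga := @g_adm R X lambda f lam0 fpr lf fm.
set g := (fun y => (f y + (`|y| ^+ 2 / (2 * lambda))%:E)%E) in gc ga *.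
have P1 : forall sd, abstract_subdiff ip sd -> forall x, sd f x =
       (fun u => u - lambda^-1 *: x) @` csubdiff ip g x.
  move=> sd [Ha _ _ Hd] x.
  have Hf : (fun y => (g y + ((- lambda^-1) * (`|y - 0| ^+ 2 / 2))%:E)%E) = f.
    apply: funext => y; rewrite /g subr0 -addeA -EFinD.
    have -> : `|y| ^+ 2 / (2 * lambda) + - lambda^-1 * (`|y| ^+ 2 / 2) = 0.
      by field; rewrite gt_eqF.
    by rewrite adde0.
  have := Hd g (- lambda^-1) 0 ga; rewrite Hf => -> /=.
  rewrite (Ha g ga gc); congr (_ @` _); apply: funext => u.
  by rewrite subr0 scaleNr.
split => // sd1 sd2 h1 h2; apply: funext => x.
by rewrite (P1 _ h1) (P1 _ h2).
Qed.
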